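(* Let $n,m \in \mathbb{N}$, $a \in \Delta_n^+$, $b \in \Delta_m^+$, $\lambda > 0$, and let $g \colon \mathbb{R}^{n\times m} \to \mathbb{R}$ be a function whose gradient $\nabla g$ exists. Define $T_\lambda \colon \mathbb{R}^{n\times m} \to \Pi_{a,b}^+$ by $T_\lambda = \Phi_\lambda \circ \nabla g$, i.e. \[ T_\lambda(A) = \operatorname{argmin}_{\pi \in \Pi_{a,b}} \big(\langle \nabla g(A), \pi\rangle + \lambda h(\pi)\big) \quad \forall A \in \mathbb{R}^{n\times m}. \] If $g$ is convex, then the problem $\min_{\pi \in \Pi_{a,b}} \big(g(\pi) + \lambda h(\pi)\big)$ admits a unique minimizer $\pi^\star$, this minimizer lies in $\Pi_{a,b}^+$, and $\pi^\star$ is the unique fixed point of $T_\lambda$, i.e. $\pi^\star = T_\lambda(\pi^\star)$ and $T_\lambda$ has no other fixed point.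
   Context: $\Delta_n^+ := \{a \in \mathbb{R}^n : a_i > 0\ \forall i,\ \sum_i a_i = 1\}$. $\Pi_{a,b} := \{\pi \in \mathbb{R}_+^{n\times m} : \pi 1_m = a,\ \pi^\top 1_n = b\}$ (couplings), and $\Pi_{a,b}^+ := \{\pi \in \Pi_{a,b} : \pi_{ij} > 0\ \forall i,j\}$. $h(\pi) := \sum_{i,j} \pi_{ij}\log\frac{\pi_{ij}}{e}$ (with $0\log 0 = 0$) is the entropy function. $\langle A, B\rangle = \mathrm{tr}(A^\top B)$ is the Frobenius inner product. For $C \in \mathbb{R}^{n\times m}$, $\Phi_\lambda(C) := \operatorname{argmin}_{\pi \in \Pi_{a,b}} (\langle C,\pi\rangle + \lambda h(\pi))$, which is a well-defined (unique) element of $\Pi_{a,b}^+$. *)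

(* Defs.v *)
From HB Require Import structures.
From mathcomp Require Import all_boot all_order all_algebra.
From mathcomp Require Import all_classical all_reals all_analysis.
Set Implicit Arguments. Unset Strict Implicit. Unset Printing Implicit Defensive.
Import Order.TTheory GRing.Theory Num.Theory.
Import numFieldNormedType.Exports.
Local Open Scope classical_set_scope.
Local Open Scope ring_scope.

Section Defs.
Variable R : realType.

Definition pos_simplex (n : nat) (a : 'I_n -> R) : Prop :=
  (forall i, 0 < a i) /\ \sum_(i < n) a i = 1.

Definition couplings (n m : nat) (a : 'I_n -> R) (b : 'I_m -> R)
  : set 'M[R]_(n, m) :=
  [set pi | (forall i j, 0 <= pi i j) /\
            (forall i, \sum_(j < m) pi i j = a i) /\
            (forall j, \sum_(i < n) pi i j = b j)].

Definition pos_couplings (n m : nat) (a : 'I_n -> R) (b : 'I_m -> R)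
  : set 'M[R]_(n, m) :=
  [set pi | couplings a b pi /\ forall i j, 0 < pi i j].

Definition frob (n m : nat) (A B : 'M[R]_(n, m)) : R :=
  \tr (A^T *m B).

Definition entropy (n m : nat) (pi : 'M[R]_(n, m)) : R :=
  \sum_(i < n) \sum_(j < m)
     (if pi i j == 0 then 0 else pi i j * ln (pi i j / expR 1)).

Definition is_argmin (T : Type) (S : set T) (f : T -> R) (x : T) : Prop :=
  S x /\ forall y, S y -> f x <= f y.

(* Phi_lambda(C) = argmin_{pi in Pi_{a,b}} <C,pi> + lambda h(pi)
   (chosen by classical choice; the minimizer is unique) *)
Definition Phi (n m : nat) (a : 'I_n -> R) (b : 'I_m -> R) (lam : R)
  (C : 'M[R]_(n, m)) : 'M[R]_(n, m) :=
  xget 0 (is_argmin (couplings a b) (fun pi => frob C pi + lam * entropy pi)).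

Definition grad (n m : nat) (g : 'M[R]_(n, m) -> R) (A : 'M[R]_(n, m))
  : 'M[R]_(n, m) :=
  \matrix_(i, j) ('D_(delta_mx i j) g A).

Definition Tmap (n m : nat) (a : 'I_n -> R) (b : 'I_m -> R) (lam : R)
  (g : 'M[R]_(n, m) -> R) (A : 'M[R]_(n, m)) : 'M[R]_(n, m) :=
  Phi a b lam (grad g A).

Definition convex_fun (n m : nat) (g : 'M[R]_(n, m) -> R) : Prop :=
  forall (A B : 'M[R]_(n, m)) (t : R), 0 <= t <= 1 ->
    g (t *: A + (1 - t) *: B) <= t * g A + (1 - t) * g B.

End Defs.

(* Main.v *)
Require Import Defs.
From HB Require Import structures.
From mathcomp Require Import all_boot all_order all_algebra.
From mathcomp Require Import all_classical all_reals all_analysis.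
From mathcomp Require Import ring lra.
Import Order.TTheory GRing.Theory Num.Theory.
Import numFieldNormedType.Exports.
Local Open Scope classical_set_scope.
Local Open Scope ring_scope.

Module Helpers.
Set Implicit Arguments. Unset Strict Implicit. Unset Printing Implicit Defensive.
Section Phi.
Variable R : realType.

Definition phi (x : R) : R := x * ln (x / expR 1).

Lemma phi0 : phi 0 = 0.
Proof. by rewrite /phi mul0r. Qed.

Lemma phi_pos x : 0 < x -> phi x = x * ln x - x.
Proof.
move=> x0; rewrite /phi ln_div ?posrE ?expR_gt0 // expRK; lra.
Qed.

Lemma ln_le_sub1 (u : R) : 0 < u -> ln u <= u - 1.
Proof.
move=> u0; have := @le_ln1Dx R (u - 1); rewrite (addrC 1) subrK; apply; lra.
Qed.

Lemma ln_lt_sub1 (u : R) : 0 < u -> u != 1 -> ln u < u - 1.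
Proof.
move=> u0 u1; set s := Num.sqrt u.
have s0 : 0 < s by rewrite sqrtr_gt0.
have us : u = s ^+ 2 by rewrite sqr_sqrtr // ltW.
have s1 : s != 1 by apply: contraNneq u1 => s1; rewrite us s1 expr1n.
rewrite us lnXn // mulr2n.
have := ln_le_sub1 s0.
have : 0 < (s - 1) ^+ 2 by rewrite lt_neqAle sqr_ge0 andbT eq_sym sqrf_eq0 subr_eq0.
rewrite !expr2; nra.
Qed.

Lemma tangent_lt (z w : R) : 0 < z -> 0 <= w -> w != z -> phi z + ln z * (w - z) < phi w.
Proof.
move=> z0 w0 wz; rewrite (phi_pos z0).
have [->|wpos] := eqVneq w 0; first by rewrite phi0; lra.
have wp : 0 < w by rewrite lt_neqAle eq_sym wpos.
rewrite (phi_pos wp).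
have q0 : 0 < z / w by rewrite divr_gt0.
have q1 : z / w != 1.
  apply/eqP => H; move/eqP: wz; apply.
  have := divfK wpos z; rewrite H mul1r => ->. done.
have := ln_lt_sub1 q0 q1.
rewrite ln_div ?posrE //.
move=> H.
have : w * (ln z - ln w) < w * (z / w - 1) by rewrite ltr_pM2l.
rewrite mulrBr mulrBr mulrCA divff ?gt_eqF // mulr1 mulr1.
lra.
Qed.

Lemma tangent_le (z w : R) : 0 < z -> 0 <= w -> phi z + ln z * (w - z) <= phi w.
Proof.
move=> z0 w0; have [->|wz] := eqVneq w z; first by rewrite subrr mulr0 addr0.
exact/ltW/tangent_lt.
Qed.

Lemma phi_convex (x y t : R) : 0 <= x -> 0 <= y -> 0 <= t <= 1 ->
  phi (t * x + (1 - t) * y) <= t * phi x + (1 - t) * phi y.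
Proof.
move=> x0 y0 /andP[t0 t1]; set z := t * x + (1 - t) * y.
have z0 : 0 <= z by rewrite /z; nra.
have [zp|zle] := ltP 0 z.
  have := tangent_le zp x0; have := tangent_le zp y0.
  move=> Hy Hx.
  have Hx' := ler_wpM2l t0 Hx.
  have t1' : 0 <= 1 - t by lra.
  have Hy' := ler_wpM2l t1' Hy.
  have E : t * (phi z + ln z * (x - z)) + (1 - t) * (phi z + ln z * (y - z)) = phi z.
    by rewrite /z; ring.
  lra.
have zz : z = 0 by apply/eqP; rewrite eq_le zle z0.
have tx : t * x = 0 by apply/eqP; rewrite eq_le; apply/andP; split; [rewrite /z in zz; nra|nra].
have ty : (1 - t) * y = 0 by apply/eqP; rewrite eq_le; apply/andP; split; [rewrite /z in zz; nra|nra].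
by rewrite zz phi0 /phi !mulrA tx ty !mul0r addr0.
Qed.

Lemma phi_convex_lt (x y t : R) : 0 <= x -> 0 <= y -> x != y -> 0 < t < 1 ->
  phi (t * x + (1 - t) * y) < t * phi x + (1 - t) * phi y.
Proof.
move=> x0 y0 xy /andP[t0 t1]; set z := t * x + (1 - t) * y.
have zp : 0 < z.
  rewrite /z; have [xp|xle] := ltP 0 x; first nra.
  have -> : x = 0 by apply/eqP; rewrite eq_le xle x0.
  have yp : 0 < y by rewrite lt_neqAle y0 andbT; apply: contraNneq xy => <-; rewrite eq_le xle x0.
  nra.
have xz : x != z.
  apply: contraNneq xy => Hxz; apply/eqP.
  have : (1 - t) * (y - x) = 0 by rewrite /z in Hxz; lra.
  move/eqP; rewrite mulf_eq0 => /orP[/eqP H|/eqP H]; lra.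
have := tangent_lt zp x0 xz; have := tangent_le zp y0.
move=> Hy Hx.
have Hx' : t * (phi z + ln z * (x - z)) < t * phi x by rewrite ltr_pM2l.
have t1' : 0 <= 1 - t by lra.
have Hy' := ler_wpM2l t1' Hy.
have E : t * (phi z + ln z * (x - z)) + (1 - t) * (phi z + ln z * (y - z)) = phi z.
  by rewrite /z; ring.
lra.
Qed.

End Phi.

Section Mat.
Variable R : realType.
Variables (n m : nat).
Implicit Types (x y C pi : 'M[R]_(n, m)).

Lemma sum_lt_one (I : finType) (F G : I -> R) (i0 : I) :
  (forall i, F i <= G i) -> F i0 < G i0 -> \sum_i F i < \sum_i G i.
Proof.
move=> FG Fi0; rewrite (bigD1 i0) //= [X in _ < X](bigD1 i0) //=.
by apply: ltr_leD => //; apply: ler_sum => i _.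
Qed.

Lemma entropyE pi : entropy pi = \sum_i \sum_j phi (pi i j).
Proof.
apply: eq_bigr => i _; apply: eq_bigr => j _.
by case: eqP => [->|//]; rewrite phi0.
Qed.

Lemma frobE C pi : frob C pi = \sum_i \sum_j C i j * pi i j.
Proof.
rewrite /frob /mxtrace exchange_big /=; apply: eq_bigr => j _.
rewrite mxE; apply: eq_bigr => i _; by rewrite mxE.
Qed.

Lemma frobD C x y : frob C (x + y) = frob C x + frob C y.
Proof. by rewrite /frob mulmxDr mxtraceD. Qed.

Lemma frobZ C t x : frob C (t *: x) = t * frob C x.
Proof. by rewrite /frob -scalemxAr mxtraceZ. Qed.

Lemma frobN C x : frob C (- x) = - frob C x.
Proof. by rewrite -scaleN1r frobZ mulN1r. Qed.

Lemma frobB C x y : frob C (x - y) = frob C x - frob C y.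
Proof. by rewrite frobD frobN. Qed.

Lemma entropy_convex x y t : (forall i j, 0 <= x i j) -> (forall i j, 0 <= y i j) ->
  0 <= t <= 1 ->
  entropy (t *: x + (1 - t) *: y) <= t * entropy x + (1 - t) * entropy y.
Proof.
move=> x0 y0 t01; rewrite !entropyE !mulr_sumr -big_split /=.
apply: ler_sum => i _; rewrite !mulr_sumr -big_split /=; apply: ler_sum => j _.
by rewrite !mxE; apply: phi_convex.
Qed.

Lemma entropy_convex_lt x y t : (forall i j, 0 <= x i j) -> (forall i j, 0 <= y i j) ->
  x != y -> 0 < t < 1 ->
  entropy (t *: x + (1 - t) *: y) < t * entropy x + (1 - t) * entropy y.
Proof.
move=> x0 y0 xy /andP[t0 t1].
have [i0 [j0 Hij]] : exists i j, x i j != y i j.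
  case: (pselect (exists i j, x i j != y i j)) => // H; exfalso.
  move/eqP: xy; apply; apply/matrixP => i j; apply/eqP/negPn/negP => Hne.
  by apply: H; exists i, j.
have t01 : 0 <= t <= 1 by apply/andP; split; lra.
rewrite !entropyE !mulr_sumr -big_split /=.
apply: (@sum_lt_one _ _ _ i0) => [i|]; rewrite !mulr_sumr -big_split /=.
  by apply: ler_sum => j _; rewrite !mxE; apply: phi_convex.
apply: (@sum_lt_one _ _ _ j0) => [j|]; rewrite !mxE.
  by apply: phi_convex.
by apply: phi_convex_lt => //; apply/andP.
Qed.

Variables (a : 'I_n -> R) (b : 'I_m -> R).

Lemma couplings_convex x y t : couplings a b x -> couplings a b y -> 0 <= t <= 1 ->
  couplings a b (t *: x + (1 - t) *: y).
Proof.
move=> [x0 [xa xb]] [y0 [ya yb]] /andP[t0 t1]; split; [|split].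
- move=> i j; rewrite !mxE; have := x0 i j; have := y0 i j; nra.
- move=> i; under eq_bigr do rewrite !mxE.
  by rewrite big_split /= -!mulr_sumr xa ya; ring.
- move=> j; under eq_bigr do rewrite !mxE.
  by rewrite big_split /= -!mulr_sumr xb yb; ring.
Qed.

Lemma couplings_le1 x : pos_simplex a -> couplings a b x -> forall i j, x i j <= 1.
Proof.
move=> [a0 a1] [x0 [xa xb]] i j.
apply: (@le_trans _ _ (a i)).
  rewrite -xa (bigD1 j) //= lerDl; exact: sumr_ge0.
rewrite -a1 (bigD1 i) //= lerDl; apply: sumr_ge0 => k _; exact: ltW.
Qed.

Definition prodc : 'M[R]_(n, m) := \matrix_(i, j) (a i * b j).

Lemma prodc_pos : pos_simplex a -> pos_simplex b -> pos_couplings a b prodc.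
Proof.
move=> [a0 a1] [b0 b1]; split; last by move=> i j; rewrite mxE mulr_gt0.
split; [|split].
- by move=> i j; rewrite mxE ltW // mulr_gt0.
- by move=> i; under eq_bigr do rewrite mxE; rewrite -mulr_sumr b1 mulr1.
- by move=> j; under eq_bigr do rewrite mxE; rewrite -mulr_suml a1 mul1r.
Qed.

End Mat.

Section Cont.
Variable R : realType.

Lemma phi_cont0 : {for (0:R), continuous (@phi R)}.
Proof.
apply/cvgrPdist_lt => e e0; rewrite phi0 /=.
apply/nbhs_ballP; exists (Num.min 1 ((e / 3) ^+ 2)) => /=.
  by rewrite lt_min ltr01 exprn_gt0 // divr_gt0.
move=> y; rewrite /ball /= sub0r normrN => /[dup] Hy.
rewrite lt_min => /andP[y1 ye].
rewrite sub0r normrN.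
have [yle|ypos] := leP y 0.
  by rewrite /phi ln0 ?mulr0 ?normr0 // pmulr_lle0 // invr_gt0 expR_gt0.
have Hy1 : y < 1 by move: y1; rewrite gtr0_norm.
have Hye : y < (e / 3) ^+ 2 by move: ye; rewrite gtr0_norm.
rewrite (phi_pos ypos).
set s := Num.sqrt y.
have s0 : 0 < s by rewrite sqrtr_gt0.
have ys : y = s ^+ 2 by rewrite sqr_sqrtr // ltW.
have se : s < e / 3.
  rewrite -(@ltr_pXn2r _ 2) //; first by rewrite -ys.
  by rewrite nnegrE ltW.
  by rewrite nnegrE ltW // divr_gt0.
have s1 : s < 1 by rewrite -(@ltr_pXn2r _ 2) // ?nnegrE ?ltW // -ys expr1n.
have L0 : ln s <= 0 by apply: ln_le0; exact: ltW.
have HsL : s - 1 <= s * ln s.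
  have si : 0 < s^-1 by rewrite invr_gt0.
  have := ln_le_sub1 si.
  rewrite lnV ?posrE //.
  move=> H.
  have := ler_wpM2l (ltW s0) H.
  rewrite mulrBr mulfV ?gt_eqF // mulr1; lra.
rewrite ys lnXn // mulr2n.
rewrite ltr_norml; apply/andP; split; rewrite !expr2; nra.
Qed.

Lemma phi_cont (x : R) : 0 <= x -> {for x, continuous (@phi R)}.
Proof.
rewrite le_eqVlt => /orP[/eqP <-|x0]; first exact: phi_cont0.
apply: cvgM; first exact: cvg_id.
have h1 : {for x, continuous (fun y : R => y / expR 1)}.
  by apply: cvgMl; exact: cvg_id.
have h2 : {for x / expR 1, continuous (@ln R)}.
  by apply: continuous_ln; rewrite divr_gt0 // expR_gt0.
exact: (continuous_comp h1 h2).
Qed.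

End Cont.

Section Cont2.
Variable R : realType.

Lemma cont_sum (T : topologicalType) (I : Type) (s : seq I) (F : I -> T -> R) x :
  (forall i, {for x, continuous (F i)}) ->
  {for x, continuous (fun y => \sum_(i <- s) F i y)}.
Proof.
move=> HF; elim: s => [|k s IH].
  have -> : (fun y => \sum_(i <- [::]) F i y) = (fun=> 0).
    by apply/funext => y; rewrite big_nil.
  exact: cst_continuous.
have -> : (fun y => \sum_(i <- k :: s) F i y) = (fun y => F k y + \sum_(i <- s) F i y).
  by apply/funext => y; rewrite big_cons.
exact: (cvgD (HF k) IH).
Qed.

Variables (n m : nat).

Lemma entropy_cont (A : 'M[R]_(n, m)) : (forall i j, 0 <= A i j) ->
  {for A, continuous (@entropy R n m)}.
Proof.
move=> A0.
have -> : @entropy R n m = (fun pi => \sum_i \sum_j phi (pi i j)).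
  by apply: funext => pi; rewrite entropyE.
apply: cont_sum => i; apply: cont_sum => j.
have h1 : {for A, continuous (fun M : 'M[R]_(n, m) => M i j)}.
  exact: coord_continuous.
exact: (continuous_comp h1 (phi_cont (A0 i j))).
Qed.

Lemma frob_cont (C A : 'M[R]_(n, m)) : {for A, continuous (@frob R n m C)}.
Proof.
have -> : @frob R n m C = (fun pi => \sum_i \sum_j C i j * pi i j).
  by apply: funext => pi; rewrite frobE.
apply: cont_sum => i; apply: cont_sum => j.
exact: (cvgM (cvg_cst (C i j)) (@coord_continuous _ _ _ i j A)).
Qed.

Lemma vec_mx_cont : continuous (@vec_mx R n m).
Proof.
move=> /= M s /= /(nbhs_ballP (vec_mx M)) [e e0 es].
apply/nbhs_ballP; exists e => //= N [_ MN]; apply: es; split => // i j.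
rewrite !mxE; exact: MN.
Qed.

Lemma closed_forall (I : Type) (f : I -> set 'M[R]_(n, m)) :
  (forall i, closed (f i)) -> closed [set x | forall i, f i x].
Proof.
move=> H; have := @closed_bigI _ I setT f (fun i _ => H i).
congr closed; apply/seteqP; split => x /= Hx i; first exact: Hx.
by move=> _; exact: Hx.
Qed.

Variables (a : 'I_n -> R) (b : 'I_m -> R).

Lemma couplings_closed : closed (couplings a b).
Proof.
have -> : couplings a b = [set x | forall i j, 0 <= x i j] `&`
    ([set x | forall i, \sum_(j < m) x i j = a i] `&`
     [set x | forall j, \sum_(i < n) x i j = b j]) by [].
apply: closedI; [|apply: closedI].
- apply: closed_forall => i; apply: closed_forall => j.
  apply: (@preimage_closed _ _ (fun M : 'M[R]_(n, m) => M i j) [set r | 0 <= r]).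
    by move=> M _; exact: coord_continuous.
  exact: closed_ge.
- apply: closed_forall => i.
  apply: (@preimage_closed _ _ (fun M : 'M[R]_(n, m) => \sum_(j < m) M i j) [set r | r = a i]).
    by move=> M _; apply: cont_sum => j; exact: coord_continuous.
  exact: closed_eq.
- apply: closed_forall => j.
  apply: (@preimage_closed _ _ (fun M : 'M[R]_(n, m) => \sum_(i < n) M i j) [set r | r = b j]).
    by move=> M _; apply: cont_sum => i; exact: coord_continuous.
  exact: closed_eq.
Qed.

Lemma couplings_compact : pos_simplex a -> compact (couplings a b).
Proof.
move=> pa.
set K := [set v : 'rV[R]_(n * m) | forall k, `[(0:R), 1]%classic (v ord0 k)].
have cK : compact K.
  by apply: (@rV_compact _ _ (fun=> `[(0:R), 1]%classic)) => _; exact: segment_compact.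
have cI : compact (@vec_mx R n m @` K).
  apply: continuous_compact => //; apply: continuous_subspaceT; exact: vec_mx_cont.
apply: (subclosed_compact couplings_closed cI).
move=> x Sx; exists (mxvec x); last exact: mxvecK.
move=> k; case/mxvec_indexP: k => i j; rewrite mxvecE /= in_itv /=.
apply/andP; split; first by case: Sx => [x0 _]; exact: x0.
exact: (couplings_le1 pa Sx).
Qed.

Lemma exists_min (F : 'M[R]_(n, m) -> R) : pos_simplex a -> pos_simplex b ->
  (forall A, couplings a b A -> {for A, continuous F}) ->
  exists x, is_argmin (couplings a b) F x.
Proof.
move=> pa pb HF.
have ne : couplings a b !=set0 by exists (prodc a b); case: (prodc_pos pa pb).
have [c cS Hc] := compact_EVT_min ne (couplings_compact pa)
   (continuous_in_subspaceT (fun x xS => HF x (set_mem xS))).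
exists c; split; first exact: set_mem.
by move=> y Sy; apply: Hc; exact: mem_set.
Qed.

End Cont2.

Section Deriv.
Variable R : realType.
Variables (n m : nat).

Lemma frob_grad (g : 'M[R]_(n, m) -> R) x d : differentiable g x ->
  frob (grad g x) d = 'D_d g x.
Proof.
move=> dg; rewrite frobE deriveE // [in RHS](matrix_sum_delta d) !linear_sum /=.
apply: eq_bigr => i _; rewrite linear_sum /=; apply: eq_bigr => j _.
by rewrite linearZ /= mxE -deriveE // mulrC.
Qed.

Lemma dir_approx (g : 'M[R]_(n, m) -> R) x d e : differentiable g x -> 0 < e ->
  exists t, 0 < t <= 1 /\
    `|(g (x + t *: d) - g x) / t - frob (grad g x) d| < e.
Proof.
move=> dg e0; rewrite frob_grad //.
have H := diff_derivable (v := d) dg.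
move/cvgrPdist_lt: H => /(_ e e0) [r /= r0 Hr].
exists (Num.min (r / 2) 1); split.
  by apply/andP; split; [rewrite lt_min divr_gt0 // ltr01|rewrite ge_min lexx orbT].
have t0 : 0 < Num.min (r / 2) 1 by rewrite lt_min divr_gt0 // ltr01.
have := Hr (Num.min (r / 2) 1).
set t := Num.min (r / 2) 1.
have tr : t < r by rewrite /t gt_min ltr_pdivrMr // ltr_pMr // ltr1n orTb.
move=> H.
have tn0 : t != 0 by rewrite gt_eqF.
have tb : ball_ Num.norm 0 r t by rewrite /ball_ /= sub0r normrN gtr0_norm.
have := H tb tn0.
rewrite -[lim _]/('D_d g x) distrC.
have -> : (g (x + t *: d) - g x) / t = t^-1 *: (g (t *: d + x) - g x).
  by rewrite (addrC x) mulrC.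
done.
Qed.

End Deriv.

Section Main.
Variable R : realType.
Variables (n m : nat) (a : 'I_n -> R) (b : 'I_m -> R) (lam : R).
Hypotheses (pa : pos_simplex a) (pb : pos_simplex b) (lam0 : 0 < lam).

Local Notation S := (couplings a b).

Lemma seg_eq (x pi : 'M[R]_(n, m)) t : x + t *: (pi - x) = t *: pi + (1 - t) *: x.
Proof. by apply/matrixP => i j; rewrite !mxE; ring. Qed.

Lemma S_nonneg x : S x -> forall i j, 0 <= x i j.
Proof. by case. Qed.

Lemma first_order (g : 'M[R]_(n, m) -> R) x : differentiable g x ->
  is_argmin S (fun pi => g pi + lam * entropy pi) x ->
  is_argmin S (fun pi => frob (grad g x) pi + lam * entropy pi) x.
Proof.
move=> dg [Sx Hx]; split => // pi Spi.
rewrite leNgt; apply/negP => Hlt.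
set G := grad g x.
set del := frob G x + lam * entropy x - (frob G pi + lam * entropy pi).
have del0 : 0 < del by rewrite /del subr_gt0.
have [t [/andP[t0 t1] Ht]] := dir_approx (pi - x) dg del0.
rewrite seg_eq in Ht.
have t01 : 0 <= t <= 1 by rewrite ltW.
have St := couplings_convex Spi Sx t01.
have Hm := Hx _ St.
have Hc := entropy_convex (S_nonneg Spi) (S_nonneg Sx) t01.
rewrite frobB -/G in Ht.
have Hq : lam * (entropy x - entropy pi) <= (g (t *: pi + (1 - t) *: x) - g x) / t.
  rewrite ler_pdivlMr //.
  have : lam * (t * (entropy x - entropy pi)) <= lam * (entropy x - entropy (t *: pi + (1 - t) *: x)).
    by rewrite ler_pM2l //; lra.
  lra.
move: Ht; rewrite ltr_norml => /andP[_ Ht2].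
move: del0 Hq Ht2; rewrite /del; lra.
Qed.

Lemma fixed_to_min (g : 'M[R]_(n, m) -> R) x : differentiable g x -> convex_fun g ->
  is_argmin S (fun pi => frob (grad g x) pi + lam * entropy pi) x ->
  is_argmin S (fun pi => g pi + lam * entropy pi) x.
Proof.
move=> dg cg [Sx Hx]; split => // pi Spi.
rewrite leNgt; apply/negP => Hlt.
set G := grad g x.
set del := g x + lam * entropy x - (g pi + lam * entropy pi).
have del0 : 0 < del by rewrite /del subr_gt0.
have [t [/andP[t0 t1] Ht]] := dir_approx (pi - x) dg del0.
rewrite seg_eq in Ht.
have t01 : 0 <= t <= 1 by rewrite ltW.
have Hm := Hx _ Spi.
have Hc := cg pi x t t01.
rewrite frobB -/G in Ht.
have Hq : (g (t *: pi + (1 - t) *: x) - g x) / t <= g pi - g x.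
  rewrite ler_pdivrMr //; lra.
move: Ht; rewrite ltr_norml => /andP[Ht1 _].
move: del0 Hq Ht1 Hm; rewrite /del; lra.
Qed.

Lemma uniq_min (g : 'M[R]_(n, m) -> R) x y : convex_fun g ->
  is_argmin S (fun pi => g pi + lam * entropy pi) x ->
  is_argmin S (fun pi => g pi + lam * entropy pi) y -> x = y.
Proof.
move=> cg [Sx Hx] [Sy Hy]; apply/eqP/negPn/negP => xy.
have t01 : 0 < (1/2 : R) < 1 by apply/andP; split; lra.
have t01' : 0 <= (1/2 : R) <= 1 by apply/andP; split; lra.
have Sm := couplings_convex Sx Sy t01'.
have Hm := Hx _ Sm.
have := Hy _ Sx; have := Hx _ Sy.
have Hc := entropy_convex_lt (S_nonneg Sx) (S_nonneg Sy) xy t01.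
have Hg := cg x y (1/2) t01'.
have : lam * entropy ((1/2) *: x + (1 - (1/2)) *: y) <
   lam * ((1/2) * entropy x + (1 - (1/2)) * entropy y) by rewrite ltr_pM2l.
lra.
Qed.

Lemma frob_convex C : convex_fun (@frob R n m C).
Proof. by move=> A B t _; rewrite frobD !frobZ. Qed.

Lemma pos_min C x : is_argmin S (fun pi => frob C pi + lam * entropy pi) x ->
  forall i j, 0 < x i j.
Proof.
move=> [Sx Hx] i0 j0; rewrite lt_neqAle S_nonneg // andbT; apply/negP => /eqP/esym x0.
have [p0S p0pos] := prodc_pos pa pb.
set p0 := prodc a b in p0S p0pos *.
set p := a i0 * b j0.
have pp : 0 < p by have := p0pos i0 j0; rewrite /p0 mxE.
set K := frob C (p0 - x) + lam * (entropy p0 - entropy x).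
set t := expR (- ((`|K| + 1) / (lam * p))).
have t0 : 0 < t by rewrite expR_gt0.
have t1 : t <= 1.
  rewrite /t expR_le1 oppr_le0; apply: divr_ge0.
    by apply: addr_ge0.
  exact: ltW (mulr_gt0 lam0 pp).
have lnt : ln t = - ((`|K| + 1) / (lam * p)) by rewrite /t expRK.
have t01 : 0 <= t <= 1 by rewrite ltW.
have St := couplings_convex p0S Sx t01.
have Hm := Hx _ St.
have Hent : entropy (t *: p0 + (1 - t) *: x) - entropy x <=
    t * (entropy p0 - entropy x) + t * p * ln t.
  suff : entropy (t *: p0 + (1 - t) *: x) - (t * entropy p0 + (1 - t) * entropy x)
      <= t * p * ln t by lra.
  set D := fun i j => phi ((t *: p0 + (1 - t) *: x) i j) -
        (t * phi (p0 i j) + (1 - t) * phi (x i j)).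
  have Dle : forall i j, D i j <= 0.
    move=> i j; rewrite /D subr_le0 mxE [X in phi (_ + X)]mxE mxE.
    apply: phi_convex => //; [exact: (S_nonneg p0S)|exact: (S_nonneg Sx)].
  have DE : D i0 j0 = t * p * ln t.
    rewrite /D !mxE x0 mulr0 addr0 phi0 mulr0 addr0.
    have tp : 0 < t * p by rewrite mulr_gt0.
    rewrite -/p (phi_pos tp) (phi_pos pp) lnM ?posrE //; ring.
  have -> : entropy (t *: p0 + (1 - t) *: x) - (t * entropy p0 + (1 - t) * entropy x)
      = \sum_i \sum_j D i j.
    rewrite !entropyE !mulr_sumr -big_split -sumrB /=; apply: eq_bigr => i _.
    by rewrite !mulr_sumr -big_split -sumrB.
  rewrite (bigD1 i0) //= (bigD1 j0) //= -DE -addrA gerDl.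
  have h1 : \sum_(j < m | j != j0) D i0 j <= 0 by apply: sumr_le0 => j _; exact: Dle.
  have h2 : \sum_(i < n | i != i0) \sum_(j < m) D i j <= 0.
    by apply: sumr_le0 => i _; apply: sumr_le0 => j _; exact: Dle.
  lra.
have Hfrob : frob C (t *: p0 + (1 - t) *: x) - frob C x = t * frob C (p0 - x).
  by rewrite frobB frobD !frobZ; ring.
have : lam * (entropy (t *: p0 + (1 - t) *: x) - entropy x) <=
    lam * (t * (entropy p0 - entropy x) + t * p * ln t) by rewrite ler_pM2l.
have Hlp : lam * p * ln t = - (`|K| + 1).
  by rewrite lnt mulrN mulrC divfK // gt_eqF // mulr_gt0.
have HK : K <= `|K| := ler_norm K.
have : t * (K + lam * p * ln t) < 0.
  by rewrite pmulr_rlt0 // Hlp; lra.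
rewrite /K; move: Hm; nra.
Qed.

End Main.

End Helpers.
Import Helpers.

Theorem proposition2 (R : realType) (n m : nat)
  (a : 'I_n -> R) (b : 'I_m -> R) (lam : R) (g : 'M[R]_(n, m) -> R) :
  pos_simplex a -> pos_simplex b -> 0 < lam ->
  (forall A : 'M[R]_(n, m), differentiable g A) ->
  convex_fun g ->
  exists pistar : 'M[R]_(n, m),
    [/\ is_argmin (couplings a b) (fun pi => g pi + lam * entropy pi) pistar,
        (forall pi, is_argmin (couplings a b)
                      (fun pi => g pi + lam * entropy pi) pi -> pi = pistar),
        pos_couplings a b pistar,
        Tmap a b lam g pistar = pistar &
        (forall A, Tmap a b lam g A = A -> A = pistar)].
Proof.
move=> pa pb lam0 dg cg.
have contF : forall (f : 'M[R]_(n, m) -> R) A, couplings a b A ->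
    {for A, continuous f} ->
    {for A, continuous (fun pi => f pi + lam * entropy pi)}.
  move=> f A SA fc; apply: (cvgD fc); apply: (cvgM (cvg_cst lam)).
  exact: entropy_cont (S_nonneg SA).
have [ps Hps] : exists x, is_argmin (couplings a b)
    (fun pi => g pi + lam * entropy pi) x.
  apply: (exists_min pa pb) => A SA; apply: contF => //.
  exact: differentiable_continuous.
have Hps' := first_order lam0 (dg ps) Hps.
have uL : forall C x y,
    is_argmin (couplings a b) (fun pi => frob C pi + lam * entropy pi) x ->
    is_argmin (couplings a b) (fun pi => frob C pi + lam * entropy pi) y -> x = y.
  by move=> C x y; apply: (uniq_min lam0 (@frob_convex R n m C)).
exists ps; split.
- exact: Hps.
- by move=> pi Hpi; apply: (uniq_min lam0 cg Hpi Hps).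
- by split; [case: Hps | exact: (pos_min pa pb lam0 Hps')].
- rewrite /Tmap /Phi; apply: xget_unique => // y Hy; exact: (uL _ _ _ Hy Hps').
- move=> A HA.
  have exA : exists x, is_argmin (couplings a b)
      (fun pi => frob (grad g A) pi + lam * entropy pi) x.
    apply: (exists_min pa pb) => B SB; apply: contF => //; exact: frob_cont.
  have HA' : is_argmin (couplings a b)
      (fun pi => frob (grad g A) pi + lam * entropy pi) A.
    by rewrite -[X in is_argmin _ _ X]HA; exact: (xgetPex 0 exA).
  have HA2 := (fixed_to_min (dg A) cg HA').
  exact: (uniq_min lam0 cg HA2 Hps).
Qed.
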